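(* There is an absolute constant $c>0$ such that every sufficiently large positive integer $N$ can be written as $N=n_1+n_2$ with positive integers $n_1,n_2$ satisfying $F(n_i)\ge c\log N$ for $i=1,2$.
   Context: For a positive integer $n$, $F(n)$ denotes the distance from $n$ to the nearest prime number. *)

(* Defs.v *)
From mathcomp Require Import all_boot.
From Stdlib Require Import Reals.

Set Implicit Arguments.
Unset Strict Implicit.
Unset Printing Implicit Defensive.

Definition near_prime_at (n d : nat) : bool :=
  prime (n + d) || ((d <= n) && prime (n - d)).

Lemma near_prime_exists (n : nat) : exists d, near_prime_at n d.
Proof.
  have [p ltnp pp] := prime_above n.
  exists (p - n); rewrite /near_prime_at subnKC ?pp //.
  exact: ltnW.
Qed.

(* F n = distance from n to the nearest prime = min_{p prime} |n - p|. *)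
Definition F (n : nat) : nat := ex_minn (near_prime_exists n).

(* Main.v *)
Require Import Defs.
From mathcomp Require Import all_boot.
From mathcomp Require Import zify.

Lemma fact_prime_dvd p k : prime p -> p %| k`! -> p <= k.
Proof.
move=> pp; elim: k => [|k IH]; first by rewrite Euclid_dvd1.
rewrite factS Euclid_dvdM // => /orP [h|h].
  by apply: dvdn_leq.
by apply: leq_trans (IH h) _.
Qed.

Arguments fact_prime_dvd {p k}.
Lemma prime_dvd_binom n p : prime p -> n < p -> p <= n.*2 -> p %| 'C(n.*2, n).
Proof.
move=> pp np p2n.
have := bin_fact (leq_addr n n : n <= n + n).
rewrite -addnn addnK => h.
have hp : p %| (n + n)`! by apply: dvdn_fact; rewrite prime_gt0 //= addnn.
rewrite -h in hp.
have cop : coprime p (n`! * n`!).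
  rewrite prime_coprime // Euclid_dvdM //; apply/negP => /orP [] /(fact_prime_dvd pp); lia.
by rewrite (Gauss_dvdl _ cop) in hp.
Qed.

Lemma binom_le n k : 'C(n, k) <= 2 ^ n.
Proof.
elim: n k => [|n IH] k; first by case: k.
case: k => [|k]; first by rewrite bin0 expn_gt0.
rewrite binS expnS mul2n -addnn; exact: leq_add.
Qed.

Lemma cheb_aux n t : t <= n ->
  exists Q, [/\ Q %| 'C(n.*2, n), Q %| (n + t)`! & n ^ (count prime (iota n.+1 t)) <= Q].
Proof.
elim: t => [|t IH] ht.
  by exists 1; rewrite /= expn0 !dvd1n.
have [Q [h1 h2 h3]] := IH (ltnW ht).
rewrite -addn1 iotaD count_cat /= addn0.
case pp: (prime (n.+1 + t)).
- exists (Q * (n.+1 + t)); split.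
  + rewrite Gauss_dvd; last first.
      rewrite coprime_sym prime_coprime //; apply/negP => /(dvdn_trans)/(_ h2).
      move/(fact_prime_dvd pp); lia.
    rewrite h1 /=; apply: prime_dvd_binom => //; lia.
  + rewrite addnA addn1 factS mulnC -addSn; exact: dvdn_mul.
  + rewrite expnD expn1; apply: leq_mul => //; lia.
- exists Q; split => //.
  + rewrite addnA addn1 factS; exact: dvdn_mull.
  + by rewrite addn0.
Qed.

Lemma cheb n : 0 < n -> n ^ (count prime (iota n.+1 n)) <= 2 ^ n.*2.
Proof.
move=> n0; have [Q [h1 _ h3]] := @cheb_aux n n (leqnn n).
apply: leq_trans h3 _; apply: leq_trans (binom_le n.*2 n).
apply: dvdn_leq => //; rewrite bin_gt0 -addnn; exact: leq_addr.
Qed.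

Lemma cheb2 j : j * count prime (iota (2^j).+1 (2^j)) <= 2 * 2 ^ j.
Proof.
have := @cheb (2^j) (expn_gt0 2 j); rewrite -expnM leq_exp2l // -mul2n; lia.
Qed.

Definition pc m := count prime (iota 0 m).

Lemma pc_step j : pc (2 ^ j.+1 + 1) = pc (2^j + 1) + count prime (iota (2^j).+1 (2^j)).
Proof.
rewrite /pc expnS mul2n -addnn -addnA (addnC (2^j) 1) addnA iotaD count_cat add0n addn1 //.
Qed.

Lemma pc_bound s t : s * pc (2 ^ (s + t) + 1) <= s * (2 ^ s + 1) + 2 ^ (s + t).+1.
Proof.
elim: t => [|t IH].
  rewrite addn0; apply: leq_trans (leq_addr _ _); rewrite leq_mul2l.
  by rewrite /pc (leq_trans (count_size _ _)) ?size_iota ?orbT.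
rewrite (addnS s t) pc_step mulnDr.
have c := cheb2 (s + t).
have : s * count prime (iota (2 ^ (s + t)).+1 (2 ^ (s + t))) <= (s + t) * count prime (iota (2 ^ (s + t)).+1 (2 ^ (s + t))).
  by rewrite leq_mul2r leq_addr orbT.
rewrite !expnS in IH *; lia.
Qed.
Lemma union_bound (P : nat -> nat -> bool) (ps s : seq nat) W :
  (forall p, count (fun n => P n p) s <= W) ->
  count (fun n => has (P n) ps) s <= size ps * W.
Proof.
move=> hW; elim: ps => [|p ps IH] /=.
  by rewrite (eq_count (a2 := pred0)) // count_pred0.
have e := count_predUI (fun n => P n p) (fun n => has (P n) ps) s.
have := hW p; rewrite mulSn.
have -> : count (fun n => P n p || has (P n) ps) s = count (predU (fun n => P n p) (fun n => has (P n) ps)) s by [].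
lia.
Qed.

Definition near D m p := (m < p + D) && (p < m + D).

Lemma count_window (a : pred nat) s lo w :
  uniq s -> (forall n, n \in s -> a n -> lo <= n < lo + w) -> count a s <= w.
Proof.
move=> us h; rewrite -size_filter.
have -> : w = size (iota lo w) by rewrite size_iota.
apply: uniq_leq_size; first exact: filter_uniq.
move=> x; rewrite mem_filter mem_iota => /andP [ax xs]; exact: h.
Qed.

Lemma near_count1 D N p : count (fun n => near D n p) (iota 1 N) <= D.*2.
Proof.
apply: (@count_window _ _ (p - D)); first exact: iota_uniq.
move=> n _; rewrite /near; lia.
Qed.

Lemma near_count2 D N p : count (fun n => near D (N - n) p) (iota 1 N.-1) <= D.*2.
Proof.
apply: (@count_window _ _ (N - p - D)); first exact: iota_uniq.
move=> n; rewrite mem_iota /near; lia.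
Qed.

Lemma bad_near D N n X : 0 < D -> n <= N -> N + D < X -> F n < D ->
  has (near D n) (filter prime (iota 0 X)).
Proof.
move=> D0 nN NX; rewrite /F; case: ex_minnP => d hd _ dD.
move: hd; rewrite /near_prime_at => /orP [pp | /andP [dn pp]]; apply/hasP.
- exists (n + d); first by rewrite mem_filter pp mem_iota /=; lia.
  rewrite /near; lia.
- exists (n - d); first by rewrite mem_filter pp mem_iota /=; lia.
  rewrite /near; lia.
Qed.

Lemma sub_count_in (a b : pred nat) s :
  (forall x, x \in s -> a x -> b x) -> count a s <= count b s.
Proof.
elim: s => [|y s IH] //= h.
apply: leq_add; last by apply: IH => x xs; apply: h; rewrite inE xs orbT.
case ay: (a y) => //=; by rewrite (h y) // inE eqxx.
Qed.

Lemma combine N D X : 0 < D -> N + D < X -> D.*2 * pc X + D.*2 * pc X < N - 1 ->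
  exists n, [/\ 0 < n, n < N, D <= F n & D <= F (N - n)].
Proof.
move=> D0 NX hlt.
set a := fun n => (F n < D) || (F (N - n) < D).
set s := iota 1 N.-1.
case h: (has (predC a) s).
  move/hasP: h => [n]; rewrite mem_iota /a /= negb_or -!leqNgt => hn /andP [h1 h2].
  exists n; split => //; lia.
have : count a s = N - 1.
  have := count_predC a s; rewrite has_count in h; rewrite size_iota; lia.
move=> ca.
set ps := filter prime (iota 0 X).
have b1 : count (fun n => has (near D n) ps) s <= size ps * D.*2.
  apply: union_bound => p; apply: near_count1.
have b2 : count (fun n => has (near D (N - n)) ps) s <= size ps * D.*2.
  apply: union_bound => p; apply: near_count2.
have sub : count a s <= count (fun n => has (near D n) ps) s + count (fun n => has (near D (N - n)) ps) s.
  apply: leq_trans (_ : count (predU (fun n => has (near D n) ps) (fun n => has (near D (N - n)) ps)) s <= _).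
    apply: sub_count_in => n; rewrite mem_iota /a /= => hn /orP [h'|h'].
    - apply/orP; left; apply: (@bad_near D N n X) => //; lia.
    - apply/orP; right; apply: (@bad_near D N (N - n) X) => //; lia.
  have := count_predUI (fun n => has (near D n) ps) (fun n => has (near D (N - n)) ps) s; lia.
have : size ps = pc X by rewrite size_filter.
lia.
Qed.

Lemma main_nat N : 2 ^ 400 <= N ->
  exists n, [/\ 0 < n, n < N, trunc_log 2 N %/ 256 <= F n & trunc_log 2 N %/ 256 <= F (N - n)].
Proof.
move=> hN.
set K := trunc_log 2 N.
have N0 : 0 < N by apply: leq_trans hN; rewrite expn_gt0.
have hT : 2 ^ K <= N by apply: trunc_logP.
have hT2 : N < 2 ^ K.+1 by apply: trunc_log_ltn.
have K400 : 400 <= K by apply: trunc_log_max.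
set D := K %/ 256.
set s := K %/ 2.
set T := 2 ^ K. set E := 2 ^ s.
have ET : E * E <= T by rewrite /E /T -expnD leq_exp2l //; lia.
have KE : K <= E.
  have := @ltn_expl 2 (s - 2) isT.
  have -> : E = 2 ^ (s - 2) * 4 by rewrite /E -(expnD 2 (s - 2) 2) subnK //; lia.
  lia.
have KT : K <= T by apply: (leq_trans KE); apply: leq_trans ET; rewrite leq_pmulr // expn_gt0.
have hP := pc_bound s (K + 2 - s).
have e1 : s + (K + 2 - s) = K + 2 by lia.
rewrite e1 in hP.
have e2 : 2 ^ (K + 2) = 4 * T by rewrite expnD mulnC.
have e3 : 2 ^ (K + 2).+1 = 8 * T by rewrite expnS e2 mulnA.
rewrite e2 e3 -/E in hP.
set P := pc (4 * T + 1) in hP.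
have hN2 : N < 2 * T by rewrite expnS in hT2.
apply: (@combine N D (4 * T + 1)); first by rewrite /D; lia.
  rewrite /D; lia.
rewrite -/P.
rewrite ltnNge; apply/negP => hc.
have hc2 : s * (N - 1) <= 4 * D * (s * P).
  have := leq_mul (leqnn s) hc; lia.
have hc3 : 4 * D * (s * P) <= 4 * D * (s * (E + 1) + 8 * T) by rewrite leq_mul2l hP orbT.
have f1 : 256 * D <= K by rewrite /D; lia.
have f2 : 256 * (4 * D * s * E) <= 4 * s * T.
  have : 256 * D * E <= E * E by exact: leq_mul (leq_trans f1 KE) (leqnn E).
  move=> h; have := leq_mul (leqnn (4 * s)) (leq_trans h ET); lia.
have f3 : 256 * (32 * D * T) <= 32 * K * T by have := leq_mul (leqnn (32 * T)) f1; lia.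
have f4 : 256 * (4 * D * s) <= 4 * K * s by have := leq_mul (leqnn (4 * s)) f1; lia.
have f5 : K * s <= T * s by rewrite leq_mul2r KT orbT.
have f6 : K * T <= (2 * s + 1) * T by rewrite leq_mul2r; apply/orP; right; rewrite /s; lia.
have f7 : 256 * s <= s * T by rewrite mulnC leq_mul2l; apply/orP; right; lia.
have f8 : T <= s * T by rewrite leq_pmull //; rewrite /s; lia.
have f9 : s * T <= s * N by rewrite leq_mul2l hT orbT.
nia.
Qed.

From Stdlib Require Import Reals.
From Stdlib Require Import Lra.

Lemma pow2_exp m : (INR (expn 2 m) <= exp (INR m))%R.
Proof.
elim: m => [|m IH].
  by rewrite expn0 /= exp_0; lra.
rewrite expnS -multE mult_INR (S_INR m) exp_plus.
have -> : INR 2 = 2%R by simpl; lra.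
have e1 : (2 < exp 1)%R by have := exp_ineq1 1 ltac:(lra); lra.
have := pos_INR (expn 2 m).
have := exp_pos (INR m).
nra.
Qed.

Theorem proposition1 :
  exists c : R, (0 < c)%R /\
    exists N0 : nat, forall N : nat, (N0 <= N)%N -> (0 < N)%N ->
      exists n1 n2 : nat,
        (0 < n1)%N /\ (0 < n2)%N /\ N = (n1 + n2)%N /\
        (c * ln (INR N) <= INR (F n1))%R /\
        (c * ln (INR N) <= INR (F n2))%R.
Proof.
exists (/ 1024)%R; split; first lra.
exists (expn 2 400) => N hN N0.
have [n [h1 h2 h3 h4]] := @main_nat N hN.
set K := trunc_log 2 N in h3 h4.
have hT2 : N < expn 2 K.+1 by apply: trunc_log_ltn.
have K400 : 400 <= K by apply: trunc_log_max.
have hK : (ln (INR N) < INR K.+1)%R.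
  rewrite -[X in (_ < X)%R]ln_exp; apply: ln_increasing.
    by apply: lt_0_INR; apply/ltP.
  apply: (Rlt_le_trans _ (INR (expn 2 K.+1))); last exact: pow2_exp.
  by apply: lt_INR; apply/ltP.
have hD : (INR K <= 256 * INR (K %/ 256) + 255)%R.
  have : K <= 256 * (K %/ 256) + 255 by lia.
  move/leP/le_INR; rewrite plus_INR mult_INR.
  have -> : INR 256 = 256%R by simpl; lra.
  have -> : INR 255 = 255%R by simpl; lra.
  done.
have hK4 : (400 <= INR K)%R.
  have := le_INR _ _ (ssrnat.leP K400); simpl; lra.
have hc : (/ 1024 * ln (INR N) <= INR (K %/ 256))%R.
  rewrite S_INR in hK; lra.
exists n, (N - n); split => //; split; first by rewrite subn_gt0.
split; first by rewrite subnKC // ltnW.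
split; apply: (Rle_trans _ _ _ hc); apply: le_INR; apply/leP => //.
Qed.
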